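(* Let $q$ be a prime power, $m,u,v$ positive integers, and let $\mathbf y=(y_0,\dots,y_{v-1})\in\mathrm{GF}(q^m)^v$ have rank $w$. Then for every integer $s\ge w$, the number of vectors $\mathbf z=(z_0,\dots,z_{u-1})\in\mathrm{GF}(q^m)^u$ such that $\mathbf x=(\mathbf y,\mathbf z)\in\mathrm{GF}(q^m)^{u+v}$ has rank $s$ is exactly $${u\brack s-w}A(m-w,s-w)\,q^{wu}.$$
   Context: For a vector over $\mathrm{GF}(q^m)$, its rank is the dimension over $\mathrm{GF}(q)$ of the $\mathrm{GF}(q)$-span of its coordinates. $A(a,0)=1$ and $A(a,j)=\prod_{i=0}^{j-1}(q^a-q^i)$ for $j\ge1$; the Gaussian binomial is ${u\brack j}=A(u,j)/A(j,j)$ (which is $0$ when $j>u$). *)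

(* Defs.v *)
From HB Require Import structures.
From mathcomp Require Import all_boot all_order all_algebra all_field.
Set Implicit Arguments. Unset Strict Implicit. Unset Printing Implicit Defensive.
Import GRing.Theory.
Local Open Scope ring_scope.

(* A(a, j) = prod_{i<j} (q^a - q^i)  (A(a,0) = 1), computed in nat.
   For i < j the factors with i >= a only occur after the factor i = a,
   which is 0, so truncated subtraction is harmless. *)
Definition Acount (q a j : nat) : nat := (\prod_(i < j) (q ^ a - q ^ i))%N.

(* Gaussian binomial [u choose j]_q = A(u,j)/A(j,j) (exact division; 0 if j > u). *)
Definition gauss_binom (q u j : nat) : nat := (Acount q u j %/ Acount q j j)%N.

Definition rank_vec (K : fieldType) (L : fieldExtType K) (n : nat)
  (x : 'I_n -> L) : nat := \dim <<[seq x i | i <- enum 'I_n]>>%VS.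

Definition catv (K : fieldType) (L : fieldExtType K) (v u : nat)
  (y : 'I_v -> L) (z : 'I_u -> L) : 'I_(v + u) -> L :=
  fun i => match split i with inl j => y j | inr k => z k end.

(* Main.v *)
Require Import Defs.
From HB Require Import structures.
From mathcomp Require Import all_boot all_order all_algebra all_field.
From mathcomp Require Import zify.
Set Implicit Arguments. Unset Strict Implicit. Unset Printing Implicit Defensive.

Section Arith.
Variable q : nat.
Hypothesis q_gt1 : 1 < q.

Fixpoint G (u j : nat) : nat :=
  match u, j with
  | 0, j => (j == 0)
  | u'.+1, 0 => 1
  | u'.+1, j'.+1 => G u' j' + q ^ j'.+1 * G u' j'.+1
  end.

Lemma G0 u : G u 0 = 1.
Proof. by case: u. Qed.

Lemma A_recr a j : Acount q a j.+1 = Acount q a j * (q ^ a - q ^ j).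
Proof. by rewrite /Acount big_ord_recr. Qed.

Lemma A_SS a j : Acount q a.+1 j.+1 = (q ^ a.+1 - 1) * q ^ j * Acount q a j.
Proof.
rewrite /Acount big_ord_recl /= expn0 -mulnA; congr (_ * _).
rewrite (eq_bigr (fun i : 'I_j => q * (q ^ a - q ^ i))); last first.
  by move=> i _; rewrite /bump /= add1n !expnS mulnBr.
by rewrite big_split /= prod_nat_const card_ord.
Qed.

Lemma A_small a j : a < j -> Acount q a j = 0.
Proof.
move=> aj; rewrite /Acount (bigD1 (Ordinal aj)) //= subnn.
by rewrite mul0n.
Qed.

Lemma A_gt0 j : 0 < Acount q j j.
Proof.
rewrite /Acount prodn_gt0 // => i; rewrite subn_gt0 ltn_exp2l //.
Qed.

Lemma G_A u j : G u j * Acount q j j = Acount q u j.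
Proof.
elim: u j => [|u IH] [|j] /=.
- by rewrite /Acount big_ord0.
- by rewrite mul0n A_small.
- by rewrite /Acount !big_ord0.
rewrite mulnDl -mulnA IH (A_SS j j) mulnCA IH A_SS A_recr.
case: (leqP j u) => ju; last by rewrite A_small // !(mul0n, muln0).
have h1 : q ^ j <= q ^ u by rewrite leq_exp2l // ltnW.
have h2 : 0 < q ^ j by rewrite expn_gt0 ltnW.
rewrite !expnS.
set a := q ^ j; set b := q ^ u; set X := Acount q u j.
have h3 : q * a <= q * b by rewrite leq_mul2l h1 orbT.
have h4 : 1 <= q * a by rewrite muln_gt0 h2 (ltnW q_gt1).
have key : q * a - 1 + q * (b - a) = q * b - 1.
  rewrite mulnBr; lia.
rewrite -key; nia.
Qed.

Lemma gaussE u j : gauss_binom q u j = G u j.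
Proof. by rewrite /gauss_binom -G_A mulnK // A_gt0. Qed.

End Arith.
Section Vs.
Variables (K : finFieldType) (L : fieldExtType K).
Local Notation F := (finvect_type L).
Local Notation q := #|K|.
Local Notation m := (\dim {:L}).

Definition spanf n (z : 'I_n -> F) : {vspace F} := (\sum_(i < n) <[z i]>)%VS.

Lemma rank_vecE n (x : 'I_n -> L) : rank_vec x = \dim (spanf x).
Proof. by rewrite /rank_vec span_def big_map big_enum. Qed.

Lemma card_setE (T : finType) (P : pred T) : #|[set z | P z]| = \sum_z (P z : nat).
Proof.
rewrite -sum1_card big_mkcond /=; apply: eq_bigr => z _; rewrite inE; by case: (P z).
Qed.

Lemma dim_add_line (V : {vspace F}) (x : F) :
  \dim (V + <[x]>)%VS = if x \in V then \dim V else (\dim V).+1.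
Proof.
case: ifP => xV.
  by move: xV; rewrite memvE => /addv_idPl ->.
apply/eqP; rewrite eqn_leq; apply/andP; split.
  apply: leq_trans (dimv_add_leqif V <[x]>).1 _.
  by rewrite -addn1 leq_add2l dim_vline leq_b1.
rewrite (ltn_leqif (dimv_leqif_sup (addvSl V <[x]>))).
apply/negP => H; move/negP: xV; apply; rewrite memvE.
exact: subv_trans (addvSr V <[x]>) H.
Qed.

Lemma card_F : #|F| = q ^ m.
Proof.
have -> : #|F| = #|(fullv : {vspace F})| by apply: eq_card => v; rewrite memvf.
by rewrite card_vspace.
Qed.

Lemma sum_line (V : {vspace F}) s :
  \sum_(x : F) (\dim (V + <[x]>)%VS == s : nat)
  = (\dim V == s) * q ^ \dim V + ((\dim V).+1 == s) * (q ^ m - q ^ \dim V).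
Proof.
rewrite (eq_bigr (fun x => if x \in V then (\dim V == s : nat) else ((\dim V).+1 == s : nat))); last first.
  by move=> x _; rewrite dim_add_line; case: (x \in V).
rewrite (bigID (fun x => x \in V)) /=.
rewrite (eq_bigr (fun _ => (\dim V == s : nat))); last by move=> x ->.
rewrite [in X in _ + X](eq_bigr (fun _ => ((\dim V).+1 == s : nat))); last by move=> x /negbTE ->.
rewrite !sum_nat_const card_vspace mulnC; congr (_ + _); rewrite mulnC; congr (_ * _).
have := cardC (mem V); rewrite card_F card_vspace => <-.
by rewrite addKn.
Qed.

Definition consf u (x : F) (z : {ffun 'I_u -> F}) : {ffun 'I_u.+1 -> F} :=
  [ffun i => if unlift ord0 i is Some j then z j else x].

Lemma spanf_cons u x (z : {ffun 'I_u -> F}) : spanf (consf x z) = (<[x]> + spanf z)%VS.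
Proof.
rewrite /spanf big_ord_recl ffunE unlift_none; congr (_ + _)%VS.
by apply: eq_bigr => i _; rewrite ffunE liftK.
Qed.

Lemma sum_cons u (P : {ffun 'I_u.+1 -> F} -> nat) :
  \sum_f P f = \sum_(z : {ffun 'I_u -> F}) \sum_(x : F) P (consf x z).
Proof.
rewrite pair_big /= (reindex (fun p : {ffun 'I_u -> F} * F => consf p.2 p.1)) //.
apply: onW_bij.
exists (fun f : {ffun 'I_u.+1 -> F} => ([ffun j : 'I_u => f (lift ord0 j)], f ord0)).
  case=> z x /=; congr pair; last by rewrite ffunE unlift_none.
  by apply/ffunP => j; rewrite !ffunE liftK.
move=> f; apply/ffunP => i; rewrite ffunE; case: unliftP => [j|] ->; by rewrite ?ffunE.
Qed.

End Vs.
Section Main.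
Variables (K : finFieldType) (L : fieldExtType K).
Local Notation F := (finvect_type L).
Local Notation q := #|K|.
Local Notation m := (\dim {:L}).

Definition N (U : {vspace F}) u s :=
  #|[set z : {ffun 'I_u -> F} | \dim (U + spanf z)%VS == s]|.

Lemma N_S U u s : N U u.+1 s = \sum_(z : {ffun 'I_u -> F})
  ((\dim (U + spanf z)%VS == s) * q ^ s
   + ((\dim (U + spanf z)%VS).+1 == s) * (q ^ m - q ^ \dim (U + spanf z)%VS)).
Proof.
rewrite /N card_setE sum_cons; apply: eq_bigr => z _.
rewrite (eq_bigr (fun x : F => (\dim (U + spanf z + <[x]>)%VS == s : nat))); last first.
  by move=> x _; rewrite spanf_cons [(<[x]> + _)%VS]addvC addvA.
rewrite sum_line; congr (_ + _).
by case: eqP => // ->.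
Qed.

Lemma dimU_le U u (z : {ffun 'I_u -> F}) : \dim U <= \dim (U + spanf z)%VS.
Proof. exact: dimvS (addvSl _ _). Qed.

Lemma dimU_m (U : {vspace F}) : \dim U <= m.
Proof. by have := dimvS (subvf U); rewrite dimvf. Qed.

Lemma N_closed U u j :
  N U u (\dim U + j) = G q u j * Acount q (m - \dim U) j * q ^ (\dim U * u).
Proof.
have q1 : 1 < q := card_finNzRing_gt1 K.
elim: u j => [|u IH] j.
  rewrite /N card_setE /= muln0 expn0 muln1.
  rewrite (eq_bigr (fun _ => (j == 0 : nat))); last first.
    move=> z _; rewrite /spanf big_ord0 addv0.
    by rewrite -{1}[\dim U]addn0 eqn_add2l eq_sym.
  rewrite sum_nat_const card_ffun card_ord expn0 mul1n.
  by case: j => [|j] //=; rewrite /Acount big_ord0.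
rewrite N_S big_split /= -big_distrl /= -card_setE -/(N U u _) IH.
set w := \dim U.
have wm : w <= m := dimU_m U.
case: j => [|j].
  rewrite big1; last first.
    move=> z _; have := dimU_le U z.
    rewrite addn0; case: eqP => //; rewrite -/w; lia.
  rewrite /= /Acount !big_ord0 !G0 mulnS expnD expn0; rewrite (mulnS w u) expnD; nia.
rewrite (eq_bigr (fun z : {ffun 'I_u -> F} =>
   (\dim (U + spanf z)%VS == w + j : nat) * (q ^ m - q ^ (w + j)))); last first.
  by move=> z _; rewrite addnS eqSS; case: eqP => // ->.
rewrite -big_distrl /= -card_setE -/(N U u _) IH /=.
rewrite A_recr.
have -> : q ^ m - q ^ (w + j) = q ^ w * (q ^ (m - w) - q ^ j).
  by rewrite mulnBr -!expnD subnKC.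
rewrite mulnS expnD !expnD.
set a := q ^ w; set b := q ^ (w * u); set c := q ^ (m - w) - q ^ j.
set g1 := G q u j.+1; set g0 := G q u j; set A0 := Acount q (m - w) j.
nia.
Qed.

End Main.

Theorem lemma8 (K : finFieldType) (L : fieldExtType K) (u v : nat)
  (y : 'I_v -> L) (w s : nat) :
  (0 < u)%N -> (0 < v)%N -> rank_vec y = w -> (w <= s)%N ->
  #|[set z : {ffun 'I_u -> finvect_type L} | rank_vec (catv y z) == s]|
  = (gauss_binom #|K| u (s - w) * Acount #|K| (\dim {:L} - w) (s - w)
       * #|K| ^ (w * u))%N.
Proof.
move=> _ _ hw ws.
have q1 : 1 < #|K| := card_finNzRing_gt1 K.
rewrite gaussE //.
have -> : [set z : {ffun 'I_u -> finvect_type L} | rank_vec (catv y z) == s]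
        = [set z : {ffun 'I_u -> finvect_type L} |
             \dim (spanf (y : 'I_v -> finvect_type L) + spanf z)%VS == s].
  apply/setP => z; rewrite !inE rank_vecE; congr (\dim _ == s).
  rewrite /spanf big_split_ord; congr (_ + _)%VS; apply: eq_bigr => i _;
    by rewrite /catv (unsplitK (inl _ _)) || rewrite /catv (unsplitK (inr _ _)).
have hw' : \dim (spanf (y : 'I_v -> finvect_type L)) = w by rewrite -rank_vecE.
have := N_closed (spanf (y : 'I_v -> finvect_type L)) u (s - w).
rewrite /N hw' subnKC //; by move=> ->.
Qed.
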